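(* Let $G$ and $L$ be topological groups with $G$ a Baire space, and let $H$ be a first countable convergence group. Then every separately continuous bihomomorphism $u: G\times H\to L$ is jointly continuous (with respect to the product convergence structure on $G\times H$).
   Context: All groups are abelian. A convergence structure on a set $X$ assigns to each $x$ a collection of filters converging to $x$. This assignment must satisfy three conditions: point ultrafilters converge to their point; finite intersections of filters converging to $x$ converge to $x$; and finer filters of convergent filters converge. A map is continuous if it sends filters converging to $x$ to filters converging to the image of $x$. A convergence group is an abelian group with a convergence structure such that $\mathcal F\to x$, $\mathcal G\to y$ imply $\mathcal F-\mathcal G\to x-y$. Topological groups are convergence groups, with convergent filters being those finer than the neighbourhood filter. In the product convergence structure, a filter converges iff its projections converge. A convergence space is first countable if for every filter $\mathcal F\to x$ there is a filter $\mathcal V\subseteq\mathcal F$ with a countable base such that $\mathcal V\to x$. A bihomomorphism is a map that is a homomorphism in each variable. It is separately continuous if it is continuous in each variable separately. *)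

(* Defs.v *)
From HB Require Import structures.
From mathcomp Require Import all_boot all_algebra.
Set Implicit Arguments. Unset Strict Implicit. Unset Printing Implicit Defensive.
Import GRing.Theory.
Local Open Scope ring_scope.

Definition pset (X : Type) := X -> Prop.
Definition subset_of {X : Type} (A B : pset X) : Prop := forall x, A x -> B x.

Definition is_filter {X : Type} (F : pset (pset X)) : Prop :=
  [/\ F (fun _ => True),
      ~ F (fun _ => False),
      (forall A B, F A -> F B -> F (fun x => A x /\ B x)) &
      (forall A B, subset_of A B -> F A -> F B)].

Definition principal {X : Type} (x : X) : pset (pset X) := fun A => A x.

Definition filter_meet {X : Type} (F G : pset (pset X)) : pset (pset X) :=
  fun A => F A /\ G A.

Definition fmap {X Y : Type} (f : X -> Y) (F : pset (pset X)) : pset (pset Y) :=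
  fun B => F (fun x => B (f x)).

Definition filter_prod {X Y : Type} (F : pset (pset X)) (G : pset (pset Y))
  : pset (pset (X * Y)) :=
  fun P => exists A B, F A /\ G B /\ (forall a b, A a -> B b -> P (a, b)).

(* A convergence structure: conv F x means "F converges to x". *)
Definition convergence (X : Type) := pset (pset X) -> X -> Prop.

Definition is_convergence {X : Type} (c : convergence X) : Prop :=
  [/\ (forall F x, c F x -> is_filter F),
      (forall x, c (principal x) x),
      (forall F G x, c F x -> c G x -> c (filter_meet F G) x) &
      (forall F G x, c F x -> is_filter G -> subset_of F G -> c G x)].

Definition conv_continuous {X Y : Type} (cX : convergence X) (cY : convergence Y)
  (f : X -> Y) : Prop :=
  forall F x, cX F x -> cY (fmap f F) (f x).

Definition prod_conv {X Y : Type} (cX : convergence X) (cY : convergence Y)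
  : convergence (X * Y) :=
  fun F p => is_filter F /\ cX (fmap fst F) p.1 /\ cY (fmap snd F) p.2.

Definition filter_sub {G : zmodType} (F F' : pset (pset G)) : pset (pset G) :=
  fmap (fun p : G * G => p.1 - p.2) (filter_prod F F').

Definition is_convergence_group {G : zmodType} (c : convergence G) : Prop :=
  is_convergence c /\
  (forall F F' x y, c F x -> c F' y -> c (filter_sub F F') (x - y)).

Definition has_countable_base {X : Type} (V : pset (pset X)) : Prop :=
  exists b : nat -> pset X, forall A, V A <-> exists n, subset_of (b n) A.

Definition first_countable {X : Type} (c : convergence X) : Prop :=
  forall F x, c F x -> exists V, is_filter V /\ subset_of V F /\
                                 has_countable_base V /\ c V x.

Definition is_topology {X : Type} (T : pset (pset X)) : Prop :=
  [/\ T (fun _ => True),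
      (forall A B, T A -> T B -> T (fun x => A x /\ B x)) &
      (forall (I : Type) (U : I -> pset X), (forall i, T (U i)) ->
          T (fun x => exists i, U i x))].

Definition nbhd {X : Type} (T : pset (pset X)) (x : X) : pset (pset X) :=
  fun A => exists U, T U /\ U x /\ subset_of U A.

Definition top_conv {X : Type} (T : pset (pset X)) : convergence X :=
  fun F x => is_filter F /\ subset_of (nbhd T x) F.

Definition is_topological_group {G : zmodType} (T : pset (pset G)) : Prop :=
  is_topology T /\
  (forall (W : pset G) (x y : G), T W -> W (x - y) ->
     exists U V, [/\ T U, U x, T V, V y &
                     forall a b, U a -> V b -> W (a - b)]).

Definition dense_in {X : Type} (T : pset (pset X)) (D : pset X) : Prop :=
  forall U, T U -> (exists x, U x) -> exists x, U x /\ D x.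

Definition baire {X : Type} (T : pset (pset X)) : Prop :=
  forall D : nat -> pset X, (forall n, T (D n) /\ dense_in T (D n)) ->
    dense_in T (fun x => forall n, D n x).

Definition bihom {G H L : zmodType} (u : G -> H -> L) : Prop :=
  (forall g g' h, u (g + g') h = u g h + u g' h) /\
  (forall g h h', u g (h + h') = u g h + u g h').

Definition separately_continuous {X Y Z : Type}
  (cX : convergence X) (cY : convergence Y) (cZ : convergence Z)
  (u : X -> Y -> Z) : Prop :=
  (forall x, conv_continuous cY cZ (u x)) /\
  (forall y, conv_continuous cX cZ (fun x => u x y)).

(* Main.v *)
Require Import Defs.
From HB Require Import structures.
From mathcomp Require Import all_boot all_algebra.
From Stdlib Require Import Classical.
Import GRing.Theory.

Lemma castP {T : Type} (W : T -> Prop) {a b : T} : a = b -> W a -> W b.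
Proof. by move=> ->. Qed.

Section Helpers.
Local Open Scope ring_scope.

Lemma id1 (L : zmodType) (s q p r : L) : s = q - (p - r - (s - q - (r - p))).
Proof. rewrite -[p - r]opprB -opprD (addrC (r - p)) subrK opprK (addrC q) subrK //. Qed.

Lemma id2 (L : zmodType) (x y z : L) : z = x - y - (x - z - y).
Proof. by rewrite [x - z - y]addrAC opprB (addrC (x - y)) subrK. Qed.

Lemma fmap_filter {X Y : Type} (f : X -> Y) F : is_filter F -> is_filter (fmap f F).
Proof.
case=> h1 h2 h3 h4; split; rewrite /fmap //.
- move=> A B; exact: h3.
- move=> A B hAB; apply: h4 => x; exact: hAB.
Qed.

Lemma nbhd_filter {X : Type} (T : pset (pset X)) x : is_topology T -> is_filter (nbhd T x).
Proof.
case=> hT hI _; split.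
- exists (fun _ => True); split => //.
- by case=> U [_ [hx hs]]; exact: hs x hx.
- move=> A B [U [hU [hUx hUA]]] [V [hV [hVx hVB]]].
  exists (fun x => U x /\ V x); split; first exact: hI.
  split => // y [hy1 hy2]; split; [exact: hUA | exact: hVB].
- move=> A B hAB [U [hU [hUx hUA]]]; exists U; split => //; split => // y hy.
  exact/hAB/hUA.
Qed.

Variables (G H L : zmodType) (u : G -> H -> L) (hu : bihom u).

Lemma u1B g g' h : u (g - g') h = u g h - u g' h.
Proof.
have e : u g h = u (g - g') h + u g' h by rewrite -hu.1 subrK.
by rewrite e addrK.
Qed.

Lemma u2B g h h' : u g (h - h') = u g h - u g h'.
Proof.
have e : u g h = u g (h - h') + u g h' by rewrite -hu.2 subrK.
by rewrite e addrK.
Qed.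

Lemma u10 h : u 0 h = 0.
Proof. by have := u1B 0 0 h; rewrite !subrr. Qed.

Lemma u20 g : u g 0 = 0.
Proof. by have := u2B g 0 0; rewrite !subrr. Qed.

Variables (TG : pset (pset G)) (cH : convergence H) (TL : pset (pset L)).
Hypotheses (hG : is_topological_group TG) (hGb : baire TG)
  (hL : is_topological_group TL)
  (hsep : separately_continuous (top_conv TG) cH (top_conv TL) u).

Lemma baire_step (V : pset (pset H)) (b : nat -> pset H)
  (hb : forall A, V A <-> exists n, subset_of (b n) A) (hV : cH V 0)
  (W : pset L) (hW : TL W) (hW0 : W 0) :
  exists V1 n, [/\ TG V1, V1 0 & forall a h, V1 a -> b n h -> W (u a h)].
Proof.
case: hG => hGt hGs; case: hL => hLt hLs.
case: (hGt) => hGT hGI hGU; case: (hLt) => hLT hLI hLU.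
have [A [N [hA hA0 hN hN0 hAN]]] := hLs W 0 0 hW (castP W (esym (subrr 0)) hW0).
have [W1a [W1b [h1a h1a0 h1b h1b0 h1ab]]] := hLs A 0 0 hA (castP A (esym (subrr 0)) hA0).
pose W1 := fun x => W1a x /\ W1b x.
have hW1 : TL W1 by apply: hLI.
pose E n g := forall h, b n h -> W1 (u g h).
have Ecov : forall g, exists n, E n g.
  move=> g; have [_ hsub] := hsep.1 g V 0 hV.
  rewrite u20 in hsub.
  have : V (fun h => W1 (u g h)).
    apply: (hsub W1); exists W1; split => //; split => //.
  case/hb => n hn; by exists n.
pose I n := {O : pset G | TG O /\ forall g, O g -> ~ E n g}.
pose D n := fun x => exists i : I n, proj1_sig i x.
have hDo : forall n, TG (D n).
  move=> n; apply: (hGU (I n) (fun i => proj1_sig i)); by case=> O [].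
have [n hnd] : exists n, ~ dense_in TG (D n).
  apply: NNPP => hall.
  have hd : forall n, TG (D n) /\ dense_in TG (D n).
    move=> n; split => //; apply: NNPP => hn; apply: hall; by exists n.
  have [x [_ hx]] := hGb D hd (fun _ => True) hGT (ex_intro _ 0 Logic.I).
  have [m hm] := Ecov x; case: (hx m) => [[O [hO hOE]] hOx].
  exact: hOE x hOx hm.
have [U [hU [[g0 hg0] hUD]]] :
    exists U, TG U /\ (exists x, U x) /\ forall x, U x -> ~ D n x.
  apply: NNPP => hno; apply: hnd => U hU hne; apply: NNPP => hno2.
  apply: hno; exists U; split => //; split => // x hx hD; apply: hno2.
  by exists x.
have clE : forall z, U z -> forall O, TG O -> O z -> exists g, O g /\ E n g.
  move=> z hz O hO hOz; apply: NNPP => hno; apply: (hUD z hz).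
  have hdisj : forall g, O g -> ~ E n g by move=> g hg hE; apply: hno; exists g.
  by exists (exist _ O (conj hO hdisj)).
have [e [he hEe]] := clE g0 hg0 U hU hg0.
have [U1 [V1 [hU1 hU1e hV1 hV10 hUV]]] := hGs U e 0 hU (castP U (esym (subr0 e)) he).
exists V1, n; split => // a h ha hh.
have heb : U (e - a) := hUV e a hU1e ha.
have [O [hO [hO0 hON]]] : exists O, TG O /\ O 0 /\ forall g, O g -> N (u g h).
  have hnb : top_conv TG (nbhd TG 0) 0.
    split; [exact: nbhd_filter | by move=> A'].
  have [_ hs] := hsep.2 h _ _ hnb.
  rewrite /= u10 in hs.
  have := hs N (ex_intro _ N (conj hN (conj hN0 (fun x hx => hx)))).
  case=> O [hO [hO0 hsub]]; exists O; split => //; split => //.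
have [P [Q [hP hPe hQ hQe hPQ]]] := hGs O (e - a) (e - a) hO (castP O (esym (subrr (e - a))) hO0).
have [g' [hQg' hEg']] := clE (e - a) heb Q hQ hQe.
have key : u a h = (u e h - u g' h) - u ((e - a) - g') h.
  by rewrite !u1B -(@id2 L).
rewrite key; apply: hAN.
- apply: h1ab; [exact: (hEe h hh).1 | exact: (hEg' h hh).2].
- by apply: hON; apply: hPQ.
Qed.

End Helpers.
Arguments u1B {G H L u}.
Arguments u2B {G H L u}.
Arguments u10 {G H L u}.
Arguments u20 {G H L u}.
Arguments baire_step {G H L u} hu {TG cH TL} hG hGb hL hsep {V b} hb hV {W} hW hW0.

Theorem proposition3p4
  (G : zmodType) (TG : pset (pset G))
  (H : zmodType) (cH : convergence H)
  (L : zmodType) (TL : pset (pset L))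
  (hG : is_topological_group TG) (hGb : baire TG)
  (hH : is_convergence_group cH) (hH1 : first_countable cH)
  (hL : is_topological_group TL)
  (u : G -> H -> L)
  (hu : bihom u)
  (hsep : separately_continuous (top_conv TG) cH (top_conv TL) u) :
  conv_continuous (prod_conv (top_conv TG) cH) (top_conv TL)
    (fun p : G * H => u p.1 p.2).
Proof.
Local Open Scope ring_scope.
move=> F [x y] [hF [hFx hFy]]; simpl in hFx, hFy.
split; first exact: fmap_filter.
have [hLt hLs] := hL; have [hGt hGs] := hG.
have [[_ hprin _ _] hsubc] := hH.
case: (hF) => _ _ hFI hFM.
move=> A [W [hW [hWxy hWA]]].
have [P [Q [hP hPx hQ hQ0 hPQ]]] := hLs W (u x y) 0 hW (castP W (esym (subr0 _)) hWxy).
have [Q1 [Q2 [hQ1 hQ10 hQ2 hQ20 hQ12]]] := hLs Q 0 0 hQ (castP Q (esym (subrr 0)) hQ0).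
have F1 : F (fun p => P (u p.1 y)).
  have [_ hs] := hsep.2 y _ _ hFx.
  exact: (hs P (ex_intro _ P (conj hP (conj hPx (fun z hz => hz))))).
have F2 : F (fun p => Q1 (u x (y - p.2))).
  have hc := hsubc _ _ _ _ (hprin y) hFy.
  rewrite subrr in hc.
  have [_ hs] := hsep.1 x _ _ hc.
  rewrite (u20 hu) in hs.
  have := hs Q1 (ex_intro _ Q1 (conj hQ1 (conj hQ10 (fun z hz => hz)))).
  case=> [A' [B' [hA' [hB' hAB]]]].
  apply: hFM hB' => p hp; exact: hAB _ _ hA' hp.
have F3 : F (fun p => Q2 (u (p.1 - x) (p.2 - y))).
  have hc := hsubc _ _ _ _ hFy (hprin y).
  rewrite subrr in hc.
  have [V [hVf [hVsub [[b hb] hV0]]]] := hH1 _ _ hc.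
  have [V1 [n [hV1 hV10 hV1b]]] := baire_step hu hG hGb hL hsep hb hV0 hQ2 hQ20.
  have hbn : filter_sub (fmap snd F) (principal y) (b n).
    apply: hVsub; apply/hb; exists n => z hz //.
  case: hbn => [A' [B' [hA' [hB' hAB]]]].
  have hx1 : nbhd TG x (fun a => V1 (a - x)).
    have [U [U' [hU hUx hU' hU'x hUU]]] := hGs V1 x x hV1 (castP V1 (esym (subrr x)) hV10).
    exists U; split => //; split => // a ha; exact: hUU _ _ ha hU'x.
  have hF1 := hFx.2 _ hx1.
  apply: hFM (hFI _ _ hF1 hA') => p [h1 h2].
  by apply: hV1b => //; apply: hAB.
apply: hFM (hFI _ _ (hFI _ _ F1 F2) F3) => -[a c] [[h1 h2] h3] /=.
apply: hWA; simpl in h1, h2, h3; rewrite (@id1 _ (u a c) (u a y) (u x y) (u x c)).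
apply: hPQ => //.
have -> : u x y - u x c = u x (y - c) by rewrite (u2B hu).
have -> : u a c - u a y - (u x c - u x y) = u (a - x) (c - y) by rewrite (u1B hu) !(u2B hu).
by apply: hQ12.
Qed.
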